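(* Let $\ell \geq 1$ be an integer and let $H_\ell$ be the graph defined in the context. Then every path in $H_\ell$ has length (number of edges) at most $2\ell^2+4\ell+7$.
   Context: For an integer $\ell\ge 1$, $H_\ell$ is the graph with vertex set $V_\ell=\{v_{h,j} : h\in\{-\ell,\dots,\ell\},\ j\in\{1,\dots,2^{\ell-|h|}\}\}$ and with the following edges: (1) $v_{h,j}v_{h-1,2j-1}$ and $v_{h,j}v_{h-1,2j}$ for every $h\in\{1,\dots,\ell\}$ and $j\in\{1,\dots,2^{\ell-h}\}$; (2) $v_{h,j}v_{h+1,2j-1}$ and $v_{h,j}v_{h+1,2j}$ for every $h\in\{-\ell,\dots,-1\}$ and $j\in\{1,\dots,2^{\ell-|h|}\}$; (3) the edge $v_{\ell,1}v_{-\ell,1}$; (4) the edges $v_{0,2j-1}v_{0,2j}$ for every $j\in\{1,\dots,2^{\ell-1}\}$. Thus $H_\ell$ consists of two complete binary trees of height $\ell$ (rooted at $v_{\ell,1}$ and $v_{-\ell,1}$) whose leaves $v_{0,j}$ are identified, plus an edge between the roots and a perfect matching on consecutive leaves. *)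

(* Defs.v *)
From mathcomp Require Import all_boot all_algebra.
Import GRing.Theory Num.Theory.

Set Implicit Arguments.
Unset Strict Implicit.
Unset Printing Implicit Defensive.

Local Open Scope ring_scope.

(* A vertex v_{h,j} of H_l is encoded as the pair (h, j) : int * nat. *)
Definition vertex := (int * nat)%type.

Definition isV (l : nat) (v : vertex) : bool :=
  (- (l%:Z) <= v.1 <= l%:Z) && (1 <= v.2 <= 2 ^ (l - absz v.1))%N.

Definition Hedge (l : nat) (x y : vertex) : bool :=
  let h := x.1 in let j := x.2 in let h' := y.1 in let j' := y.2 in
  [||
      [&& 1 <= h <= l%:Z, (1 <= j <= 2 ^ (l - absz h))%N, h' == h - 1
        & (j' == (2 * j).-1)%N || (j' == 2 * j)%N],
      [&& - (l%:Z) <= h <= -1, (1 <= j <= 2 ^ (l - absz h))%N, h' == h + 1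
        & (j' == (2 * j).-1)%N || (j' == 2 * j)%N],
      [&& h == l%:Z, j == 1%N, h' == - (l%:Z) & j' == 1%N]
    | (* (4): x = v_{0,2k-1}, y = v_{0,2k} with k = j'/2 *)
      [&& h == 0, h' == 0, ~~ odd j', (1 <= j'./2 <= 2 ^ l.-1)%N
        & (j == j'.-1)%N] ].

Definition Hadj (l : nat) : rel vertex := fun x y => Hedge l x y || Hedge l y x.

Definition is_path_H (l : nat) (p : seq vertex) : bool :=
  [&& all (isV l) p, uniq p &
      match p with [::] => true | x :: p' => path (Hadj l) x p' end].

(* Main.v *)
Require Import Defs.
From mathcomp Require Import all_boot all_algebra.
From mathcomp Require Import zify.
Set Implicit Arguments. Unset Strict Implicit.

Definition anc (h : nat) (v : vertex) : nat := (v.2.-1 %/ 2 ^ (h - absz v.1)).+1.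
Definition inS (h J : nat) (v : vertex) : bool := (absz v.1 <= h)%N && (anc h v == J).

Lemma anc_step (m i j : nat) : (1 <= i)%N -> (j == (2*i).-1)%N || (j == 2*i)%N ->
  j.-1 %/ 2 ^ m.+1 = i.-1 %/ 2 ^ m.
Proof.
move=> hi hj; rewrite expnS divnMA.
have -> : (j.-1 %/ 2 = i.-1)%N by case/orP: hj => /eqP ->; lia.
by [].
Qed.

Lemma anc_child (h : nat) (a : int) (i : nat) (b : int) (j : nat) :
  absz b = (absz a).+1 -> (1 <= j)%N -> (i == (2*j).-1)%N || (i == 2*j)%N ->
  (absz b <= h)%N -> anc h (a, i) = anc h (b, j).
Proof.
move=> e hj hi hb; rewrite /anc /=.
rewrite (_ : (h - absz a = (h - absz b).+1)%N); last by lia.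
by rewrite (anc_step _ hj hi).
Qed.

Lemma anc_leaf (h : nat) (i j : nat) : (1 <= h)%N -> ~~ odd j -> (1 <= j./2)%N ->
  i = j.-1 -> anc h (0%R, i) = anc h (0%R, j).
Proof.
move=> hh oj hj ->; rewrite /anc /= subn0.
rewrite -(subnKC hh) expnS !divnMA.
have -> : (j.-1.-1 %/ 2 = j.-1 %/ 2)%N.
  have := odd_double_half j; rewrite (negbTE oj) /= => e. lia.
by [].
Qed.

Lemma anc_self (h : nat) (a : int) (j : nat) : absz a = h -> (1 <= j)%N -> anc h (a, j) = j.
Proof. move=> <- hj; rewrite /anc /= subnn expn0 divn1; lia. Qed.

Lemma anc_top (l : nat) (w : vertex) : isV l w -> anc l w = 1%N /\ (absz w.1 <= l)%N.
Proof.
case: w => a j; rewrite /isV /anc /= => /andP[/andP[h1 h2] /andP[h3 h4]].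
split; last by lia.
by rewrite divn_small //; lia.
Qed.


Lemma path_pairs {T : eqType} (e : rel T) (x : T) (p : seq T) :
  path e x p -> forall u v, (u, v) \in zip (x :: p) p -> e u v.
Proof.
elim: p x => [|y p IH] x //= /andP[exy hp] u v.
rewrite in_cons => /orP[/eqP [-> ->] //|]; exact: IH.
Qed.

Lemma pairs_mem {T : eqType} (x : T) (p : seq T) u v :
  (u, v) \in zip (x :: p) p -> (u \in x :: p) /\ (v \in x :: p).
Proof.
elim: p x => [|y p IH] x //=.
rewrite in_cons => /orP[/eqP [-> ->]|/IH [h1 h2]].
  by rewrite !in_cons !eqxx orbT.
by split; rewrite in_cons; apply/orP; right.
Qed.

Lemma exit_pair {T : eqType} (A : pred T) (x : T) (p : seq T) :
  has A (x :: p) -> ~~ A (last x p) ->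
  exists u v, [/\ (u, v) \in zip (x :: p) p, A u & ~~ A v].
Proof.
elim: p x => [|y p IH] x /=; first by rewrite orbF => ->.
case Ax: (A x) => /=; case Ay: (A y) => /= hh hl.
- have hy : has A (y :: p) by rewrite /= Ay.
  have [u [v [h1 h2 h3]]] := IH y hy hl.
  by exists u, v; rewrite in_cons h1 orbT.
- by exists x, y; rewrite in_cons eqxx Ax Ay.
- have hy : has A (y :: p) by rewrite /= Ay.
  have [u [v [h1 h2 h3]]] := IH y hy hl.
  by exists u, v; rewrite in_cons h1 orbT.
- have hy : has A (y :: p) by rewrite /= Ay.
  have [u [v [h1 h2 h3]]] := IH y hy hl.
  by exists u, v; rewrite in_cons h1 orbT.
Qed.

Lemma entry_pair {T : eqType} (A : pred T) (x : T) (p : seq T) :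
  ~~ A x -> has A (x :: p) ->
  exists u v, [/\ (u, v) \in zip (x :: p) p, ~~ A u & A v].
Proof.
elim: p x => [|y p IH] x /=; first by rewrite orbF => /negbTE ->.
move=> Ax; rewrite (negbTE Ax) /=.
case Ay: (A y) => /= hh.
- by exists x, y; rewrite in_cons eqxx Ax Ay.
- have hy : has A (y :: p) by rewrite /= Ay.
  have [u [v [h1 h2 h3]]] := IH y (negbT Ay) hy.
  by exists u, v; rewrite in_cons h1 orbT.
Qed.

Lemma pair_nth {T : eqType} (x0 x : T) (p : seq T) u v :
  (u, v) \in zip (x :: p) p ->
  exists2 i, (i < size p)%N & nth x0 (x :: p) i = u /\ nth x0 (x :: p) i.+1 = v.
Proof.
elim: p x => [|y p IH] x //=.
rewrite in_cons => /orP[/eqP [-> ->]|/IH [i hi [h1 h2]]].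
  by exists 0%N.
by exists i.+1.
Qed.

Lemma no_back {T : eqType} (x : T) (p : seq T) a b :
  uniq (x :: p) -> (a, b) \in zip (x :: p) p -> (b, a) \in zip (x :: p) p -> False.
Proof.
move=> U /(pair_nth x) [i hi [h1 h2]] /(pair_nth x) [k hk [h3 h4]].
have e1 : index a (x :: p) = i by rewrite -h1 index_uniq //=; lia.
have e2 : index a (x :: p) = k.+1 by rewrite -h4 index_uniq //=; lia.
have e3 : index b (x :: p) = i.+1 by rewrite -h2 index_uniq //=; lia.
have e4 : index b (x :: p) = k by rewrite -h3 index_uniq //=; lia.
lia.
Qed.

Definition nb {T : eqType} (x : T) (p : seq T) a w :=
  ((a, w) \in zip (x :: p) p) || ((w, a) \in zip (x :: p) p).

Lemma nb_val {T : eqType} (x : T) (p : seq T) a w : uniq (x :: p) -> nb x p a w ->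
  w = nth x (x :: p) (index a (x :: p)).+1 \/ w = nth x (x :: p) (index a (x :: p)).-1.
Proof.
move=> U /orP[] /(pair_nth x) [i hi [h1 h2]].
  left; rewrite -h2 -h1 index_uniq //=; lia.
right; rewrite -h1 -h2 index_uniq //=; lia.
Qed.

Lemma three_nb {T : eqType} (x : T) (p : seq T) a w1 w2 w3 : uniq (x :: p) ->
  nb x p a w1 -> nb x p a w2 -> nb x p a w3 ->
  w1 != w2 -> w1 != w3 -> w2 != w3 -> False.
Proof.
move=> U /(nb_val U) h1 /(nb_val U) h2 /(nb_val U) h3.
case: h1 => ->; case: h2 => ->; case: h3 => ->; rewrite ?eqxx //.
Qed.



Lemma boundary (l h J : nat) (u v : vertex) : (1 <= h)%N -> (h < l)%N ->
  isV l u -> isV l v -> Hadj l u v -> inS h J u -> ~~ inS h J v ->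
  (u = (Posz h, J) /\ v = (Posz h.+1, (J.+1 %/ 2)%N)) \/
  (u = (- Posz h, J)%R /\ v = (- Posz h.+1, (J.+1 %/ 2)%N)%R).
Proof.
case: u => a i; case: v => b j.
rewrite /Hadj /Hedge /inS /isV /=.
move=> h1 h2 /andP[/andP[ha1 ha2] /andP[hi1 hi2]] /andP[/andP[hb1 hb2] /andP[hj1 hj2]].
move=> hadj /andP[hau /eqP hJ] hnot.
case/orP: hadj => /or4P [].
- case/and4P => /andP[a1 a2] _ /eqP eb hj.
  exfalso; move/negP: hnot; apply; apply/andP; split; first by lia.
  apply/eqP; rewrite -hJ; apply: anc_child => //; lia.
- case/and4P => /andP[a1 a2] _ /eqP eb hj.
  exfalso; move/negP: hnot; apply; apply/andP; split; first by lia.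
  apply/eqP; rewrite -hJ; apply: anc_child => //; lia.
- case/and4P => /eqP ea _ _ _; lia.
- case/and5P => /eqP ea /eqP eb oj /andP[j1 j2] /eqP ij.
  exfalso; move/negP: hnot; apply; apply/andP; split; first by lia.
  apply/eqP; rewrite -hJ ea eb; symmetry; exact: anc_leaf.
- case/and4P => /andP[b1 b2] _ /eqP ea hi.
  case: (leqP (absz b) h) => hbh.
    exfalso; move/negP: hnot; apply; apply/andP; split=> //.
    apply/eqP; rewrite -hJ; symmetry; apply: anc_child => //; lia.
  left; rewrite anc_self in hJ; try lia.
  split; congr pair; try lia.
- case/and4P => /andP[b1 b2] _ /eqP ea hi.
  case: (leqP (absz b) h) => hbh.
    exfalso; move/negP: hnot; apply; apply/andP; split=> //.
    apply/eqP; rewrite -hJ; symmetry; apply: anc_child => //; lia.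
  right; rewrite anc_self in hJ; try lia.
  split; congr pair; try lia.
- case/and4P => _ _ /eqP ea _; lia.
- case/and5P => /eqP eb /eqP ea oi /andP[i1 i2] /eqP ij.
  exfalso; move/negP: hnot; apply; apply/andP; split; first by lia.
  apply/eqP; rewrite -hJ ea eb; exact: anc_leaf.
Qed.

Lemma child_sub (h J K : nat) (v : vertex) :
  (K == (2*J).-1)%N || (K == 2*J)%N -> inS h K v -> inS h.+1 J v.
Proof.
rewrite /inS /anc => hK /andP[hv /eqP e]; apply/andP; split; first by lia.
rewrite (_ : (h.+1 - absz v.1 = (h - absz v.1).+1)%N); last by lia.
rewrite expnSr divnMA.
move: e; set q := (v.2.-1 %/ 2 ^ (h - absz v.1))%N => e.
apply/eqP; lia.
Qed.

Lemma Hadj_sym l u v : Hadj l u v = Hadj l v u.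
Proof. by rewrite /Hadj orbC. Qed.

Lemma cross (l h K : nat) (x : vertex) (p : seq vertex) :
  (1 <= h)%N -> (h < l)%N -> all (isV l) (x :: p) -> path (Hadj l) x p ->
  uniq (x :: p) -> ~~ inS h K x -> ~~ inS h K (last x p) -> has (inS h K) (x :: p) ->
  nb x p (Posz h.+1, (K.+1 %/ 2)%N) (Posz h, K) /\
  nb x p (- Posz h.+1, (K.+1 %/ 2)%N)%R (- Posz h, K)%R.
Proof.
move=> h1 h2 /allP V P U nx nl hs.
have [u [v [huv Au Av]]] := exit_pair hs nl.
have [u' [v' [huv' Au' Av']]] := entry_pair nx hs.
have [mu mv] := pairs_mem huv.
have [mu' mv'] := pairs_mem huv'.
have := boundary h1 h2 (V _ mu) (V _ mv) (path_pairs P huv) Au Av.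
have adj' : Hadj l v' u' by rewrite Hadj_sym; exact: (path_pairs P huv').
have := boundary h1 h2 (V _ mv') (V _ mu') adj' Av' Au'.
rewrite /nb.
case=> [[e1 e2]|[e1 e2]]; case=> [[e3 e4]|[e3 e4]]; subst.
- by case: (no_back U huv huv').
- by rewrite huv huv' orbT.
- by rewrite huv huv' orbT.
- by case: (no_back U huv huv').
Qed.

Lemma local (l h J : nat) (x : vertex) (p : seq vertex) :
  (1 <= h)%N -> (h < l)%N -> all (isV l) (x :: p) -> path (Hadj l) x p ->
  uniq (x :: p) -> ~~ inS h.+1 J x -> ~~ inS h.+1 J (last x p) ->
  has (inS h (2*J).-1) (x :: p) -> has (inS h (2*J)) (x :: p) -> False.
Proof.
move=> h1 h2 V P U nx nl hs1 hs2.
have k1 : ((2*J).-1 == (2*J).-1)%N || ((2*J).-1 == 2*J)%N by rewrite eqxx.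
have k2 : ((2*J) == (2*J).-1)%N || ((2*J) == 2*J)%N by rewrite eqxx orbT.
have J1 : (1 <= J)%N.
  case/hasP: hs2 => z _ /andP[_ /eqP]; rewrite /anc; lia.
have nS K v : (K == (2*J).-1)%N || (K == 2*J)%N -> ~~ inS h.+1 J v -> ~~ inS h K v.
  by move=> hK; apply: contra; exact: child_sub.
have [c1 d1] := cross h1 h2 V P U (nS _ _ k1 nx) (nS _ _ k1 nl) hs1.
have [c2 d2] := cross h1 h2 V P U (nS _ _ k2 nx) (nS _ _ k2 nl) hs2.
have E1 : (((2*J).-1).+1 %/ 2 = J)%N by lia.
have E2 : ((2*J).+1 %/ 2 = J)%N by lia.
rewrite E1 in c1 d1; rewrite E2 in c2 d2.
have hsP : has (inS h.+1 J) (x :: p).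
  case/hasP: hs2 => z hz hzS; apply/hasP; exists z => //; exact: child_sub hzS.
case: (ltngtP h.+1 l) => hl; last first.
- case/hasP: hsP => z hz; rewrite /inS => /andP[_ /eqP].
  rewrite hl; have [-> _] := anc_top (allP V z hz) => eJ.
  exfalso; move/negP: nx; apply; rewrite /inS hl.
  have [-> ->] := anc_top (allP V x (mem_head _ _)).
  by rewrite -eJ.
- by move: hl; rewrite ltnNge h2.
have [u [v [huv Au Av]]] := entry_pair nx hsP.
have [mu mv] := pairs_mem huv.
have h1' : (1 <= h.+1)%N by [].
have adj' : Hadj l v u by rewrite Hadj_sym; exact: (path_pairs P huv).
case: (boundary h1' hl (allP V _ mv) (allP V _ mu) adj' Av Au) => [[e1 e2]|[e1 e2]]; subst.
- apply: (three_nb U c1 c2 (w3 := (Posz h.+2, (J.+1 %/ 2)%N))); first by rewrite /nb huv orbT.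
  + rewrite xpair_eqE negb_and; apply/orP; right; clear -J1; apply/eqP; lia.
  + rewrite xpair_eqE negb_and; apply/orP; left; clear; apply/eqP; lia.
  + rewrite xpair_eqE negb_and; apply/orP; left; clear; apply/eqP; lia.
- apply: (three_nb U d1 d2 (w3 := (- Posz h.+2, (J.+1 %/ 2)%N)%R)); first by rewrite /nb huv orbT.
  + rewrite xpair_eqE negb_and; apply/orP; right; clear -J1; apply/eqP; lia.
  + rewrite xpair_eqE negb_and; apply/orP; left; clear; apply/eqP; lia.
  + rewrite xpair_eqE negb_and; apply/orP; left; clear; apply/eqP; lia.
Qed.

Lemma count_le_pt (T : Type) (a b c : pred T) (s : seq T) :
  (forall x, (a x : nat) <= b x + c x)%N -> (count a s <= count b s + count c s)%N.
Proof.
move=> H; elim: s => //= x s IH.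
have := H x; lia.
Qed.

Lemma count_eq_pt (T : Type) (a b c : pred T) (s : seq T) :
  (forall x, (a x : nat) = b x + c x)%N -> (count a s = count b s + count c s)%N.
Proof.
move=> H; elim: s => //= x s IH.
have := H x; lia.
Qed.

Lemma count_one (h : nat) (v : vertex) (a m : nat) :
  (count (fun K => inS h K v) (iota a m) <= 1)%N.
Proof.
apply: (leq_trans (sub_count (a2 := pred1 (anc h v)) _ _)).
  by move=> K /andP[_ /eqP ->] /=.
by rewrite count_uniq_mem ?iota_uniq // leq_b1.
Qed.

Lemma pairs_count (m : nat) (P Q R : pred nat) :
  (forall K, (1 <= K)%N -> (P (2 * K).-1 + P (2 * K) <= Q K + R K)%N) ->
  (count P (iota 1 (2 * m)) <= count Q (iota 1 m) + count R (iota 1 m))%N.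
Proof.
move=> H; elim: m => [|m IH] //.
have e1 : iota 1 (2 * m.+1) = iota 1 (2 * m) ++ [:: (1 + 2 * m); (1 + 2 * m).+1].
  have -> : (2 * m.+1 = 2 * m + 2)%N by lia.
  by rewrite iotaD.
have e2 : iota 1 m.+1 = iota 1 m ++ [:: m.+1].
  by have := iotaD 1 m 1; rewrite addn1 add1n.
rewrite e1 e2 !count_cat.
have := H m.+1 isT.
rewrite (_ : ((2 * m.+1).-1 = 1 + 2 * m)%N); last by lia.
rewrite (_ : ((2 * m.+1) = (1 + 2 * m).+1)%N); last by lia.
rewrite /count; fold (count P) (count Q) (count R).
lia.
Qed.

Definition Tc (l : nat) (s : seq vertex) (h : nat) : nat :=
  count (fun K => has (inS h K) s) (iota 1 (2 ^ (l - h))).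

Lemma T_step (l h : nat) (x : vertex) (p : seq vertex) :
  (1 <= h)%N -> (h < l)%N -> all (isV l) (x :: p) -> path (Hadj l) x p ->
  uniq (x :: p) -> (Tc l (x :: p) h <= Tc l (x :: p) h.+1 + 2)%N.
Proof.
move=> h1 h2 V P U; rewrite /Tc.
have -> : (2 ^ (l - h) = 2 * 2 ^ (l - h.+1))%N.
  by rewrite (_ : (l - h = (l - h.+1).+1)%N) ?expnS //; lia.
set s := x :: p.
apply: (leq_trans (pairs_count (Q := fun K => has (inS h.+1 K) s) (R := fun K => inS h.+1 K x || inS h.+1 K (last x p)) _ _)).
  move=> K K1.
  have q1 : has (inS h (2 * K).-1) s -> has (inS h.+1 K) s.
    case/hasP=> z hz hzS; apply/hasP; exists z => //.
    by apply: (child_sub _ hzS); rewrite eqxx.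
  have q2 : has (inS h (2 * K)) s -> has (inS h.+1 K) s.
    case/hasP=> z hz hzS; apply/hasP; exists z => //.
    by apply: (child_sub _ hzS); rewrite eqxx orbT.
  case: (boolP (inS h.+1 K x || inS h.+1 K (last x p))) => hR.
    case: (boolP (has (inS h (2 * K).-1) s)) => a1;
    case: (boolP (has (inS h (2 * K)) s)) => a2;
    case: (boolP (has (inS h.+1 K) s)) => a3 //;
    first [ by move: (q1 a1); rewrite (negbTE a3)
          | by move: (q2 a2); rewrite (negbTE a3) ].
  rewrite negb_or in hR; case/andP: hR => nx nl.
  case: (boolP (has (inS h (2 * K).-1) s)) => a1;
  case: (boolP (has (inS h (2 * K)) s)) => a2;
  case: (boolP (has (inS h.+1 K) s)) => a3 //;
  first [ by case: (local h1 h2 V P U nx nl a1 a2)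
        | by move: (q1 a1); rewrite (negbTE a3)
        | by move: (q2 a2); rewrite (negbTE a3) ].
rewrite leq_add2l.
apply: (leq_trans (count_le_pt (b := fun K => inS h.+1 K x) (c := fun K => inS h.+1 K (last x p)) _ _)).
  by move=> K /=; case: (inS _ _ x); case: (inS _ _ _).
by rewrite -[2]/(1 + 1)%N leq_add // count_one.
Qed.

Lemma count_inj (T U : eqType) (a : pred T) (Pr : pred U) (f : T -> U)
  (s : seq T) (t : seq U) :
  uniq s -> {in [seq v <- s | a v] &, injective f} ->
  (forall v, v \in s -> a v -> (f v \in t) && Pr (f v)) ->
  (count a s <= count Pr t)%N.
Proof.
move=> us inj H; rewrite -!size_filter -(size_map f).
apply: uniq_leq_size.
  by rewrite map_inj_in_uniq // filter_uniq.
move=> y /mapP [v]; rewrite mem_filter => /andP[av vs] ->.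
by rewrite mem_filter; case/andP: (H v vs av) => -> ->.
Qed.

Lemma lev (l : nat) (s : seq vertex) (a : int) (h : nat) :
  absz a = h -> all (isV l) s -> uniq s ->
  (count (fun v : vertex => v.1 == a) s <= Tc l s h)%N.
Proof.
move=> eh V U; rewrite /Tc.
apply: (count_inj (f := snd)) => //.
  move=> [a1 j1] [a2 j2]; rewrite !mem_filter /= => /andP[/eqP -> _] /andP[/eqP -> _] -> //.
move=> [b j] hv /= /eqP eb; subst b.
have := allP V _ hv; rewrite /isV /= eh => /andP[_ /andP[j1 j2]].
rewrite mem_iota; apply/andP; split; first by lia.
apply/hasP; exists (a, j) => //.
by rewrite /inS /= eh leqnn anc_self // eqxx.
Qed.

Lemma anc1_leaf (j : nat) : anc 1 (0%R, j) = (j.-1 %/ 2).+1.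
Proof. by rewrite /anc /= subn0 expn1. Qed.

Lemma leaves (l : nat) (s : seq vertex) : (1 <= l)%N -> all (isV l) s -> uniq s ->
  (count (fun v : vertex => v.1 == 0%R) s <= 2 * Tc l s 1)%N.
Proof.
move=> l1 V U.
rewrite (count_eq_pt (b := fun v : vertex => (v.1 == 0%R) && odd v.2)
                     (c := fun v : vertex => (v.1 == 0%R) && ~~ odd v.2)); last first.
  by move=> v; case: (v.1 == 0%R); case: (odd v.2).
have e2 : (2 ^ l = 2 * 2 ^ (l - 1))%N by rewrite -expnS; congr (_ ^ _); lia.
have key (b : bool) : (count (fun v : vertex => (v.1 == 0%R) && (odd v.2 == b)) s <= Tc l s 1)%N.
  apply: (count_inj (f := anc 1)) => //.
    move=> [a1 j1] [a2 j2]; rewrite !mem_filter /=.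
    move=> /andP[/andP[/eqP ea1 /eqP o1] v1] /andP[/andP[/eqP ea2 /eqP o2] v2].
    have := allP V _ v1; have := allP V _ v2.
    rewrite /isV /= => /andP[_ /andP[i1 _]] /andP[_ /andP[i2 _]].
    subst a1 a2.
    rewrite !anc1_leaf => e.
    have m1 : (j1 %% 2 = j2 %% 2)%N by rewrite !modn2 o1 o2.
    congr pair; lia.
  move=> [a j] hv /= /andP[/eqP ea _]; subst a.
  have := allP V _ hv; rewrite /isV /= subn0 => /andP[_ /andP[j1 j2]].
  rewrite mem_iota anc1_leaf; apply/andP; split; first by lia.
  apply/hasP; exists (0%R, j) => //.
  by rewrite /inS /= anc1_leaf eqxx.
have k1 := key true; have k2 := key false.
rewrite mul2n -addnn leq_add //.
  by apply: leq_trans k1; apply: sub_count => v /andP[-> ->].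
by apply: leq_trans k2; apply: sub_count => v /andP[-> /negbTE ->].
Qed.

Unset Implicit Arguments.

Theorem theorem4 (l : nat) (p : seq vertex) :
  (1 <= l)%N -> is_path_H l p -> ((size p).-1 <= 2 * l ^ 2 + 4 * l + 7)%N.
Proof.
case: p => [|x p] //= l1 /and3P[V U P].
set s := x :: p.
have Tb d : (d < l)%N -> (Tc l s (l - d) <= 2 * d + 1)%N.
  elim: d => [|d IH] hd.
    rewrite subn0 /Tc subnn expn0.
    by apply: leq_trans (count_size _ _) _.
  have h1 : (1 <= l - d.+1)%N by lia.
  have h2 : (l - d.+1 < l)%N by lia.
  apply: leq_trans (T_step h1 h2 V P U) _; rewrite -/s.
  rewrite (_ : ((l - d.+1).+1 = l - d)%N); last by lia.
  have := IH (ltnW hd); lia.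
have Wstep h : (count (fun v : vertex => h <= absz v.1) s =
                count (fun v : vertex => absz v.1 == h) s +
                count (fun v : vertex => h < absz v.1) s)%N.
  by apply: count_eq_pt => v /=; case: ltngtP.
have Cb h : (h <= l)%N ->
  (count (fun v : vertex => absz v.1 == h) s <= 2 * Tc l s h)%N.
  move=> hl.
  apply: (leq_trans (count_le_pt (b := fun v : vertex => v.1 == Posz h)
                                 (c := fun v : vertex => v.1 == (- Posz h)%R) _ _)).
    move=> v /=; case: (boolP (absz v.1 == h)) => // /eqP e.
    have [->|->] : v.1 = Posz h \/ v.1 = (- Posz h)%R by lia.
      by rewrite eqxx.
    by rewrite eqxx addn1.
  rewrite mul2n -addnn; apply: leq_add; apply: lev => //.
  by rewrite abszN.
have Wb d : (d <= l)%N ->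
  (count (fun v : vertex => l + 1 - d <= absz v.1) s <= 2 * d ^ 2)%N.
  elim: d => [|d IH] hd.
    rewrite subn0 muln0 (eq_in_count (a2 := pred0)) ?count_pred0 // => v hv /=.
    have := allP V _ hv; rewrite /isV => /andP[/andP[a1 a2] _].
    apply/negbTE; rewrite -ltnNge; lia.
  rewrite (_ : (l + 1 - d.+1 = l - d)%N); last by lia.
  rewrite Wstep.
  have ed : (l + 1 - d = (l - d).+1)%N by lia.
  rewrite (eq_count (a1 := fun v : vertex => (l - d < absz v.1)%N) (a2 := fun v : vertex => (l + 1 - d <= absz v.1)%N)); last first.
    by move=> v /=; rewrite ed.
  have := IH (ltnW hd); have := Cb (l - d) (leq_subr _ _); have := Tb d hd; lia.
have hs : size s = count (fun v : vertex => 0 <= absz v.1)%N s.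
  by rewrite -count_predT; apply: eq_count.
have E0 : count (fun v : vertex => absz v.1 == 0)%N s = count (fun v : vertex => v.1 == 0%R) s.
  by apply: eq_count => v /=; rewrite absz_eq0.
have E1 : count (fun v : vertex => 0 < absz v.1)%N s = count (fun v : vertex => l + 1 - l <= absz v.1)%N s.
  have el : (l + 1 - l = 1)%N by lia.
  by apply: eq_count => v /=; rewrite el.
have L0 := leaves l1 V U; rewrite -/s in L0.
have hl1 : (l.-1 < l)%N by lia.
have T1 := Tb l.-1 hl1.
rewrite (_ : (l - l.-1 = 1)%N) in T1; last by lia.
have := Wb l (leqnn _).
move: hs; rewrite Wstep E0 E1 => hs.
have : size s = (size p).+1 by [].
lia.
Qed.
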